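(* Let $m\ge 1$ and let $A_1,\dots,A_m$ be states, with $A_{m+1}:=A_1$. Let $\varepsilon\ge 0$ with $m\varepsilon<1$. Then $$\sum_{i=1}^{m}W^{\varepsilon}(A_i\to A_{i+1})\ \le\ W^{m\varepsilon}(A_1\to A_1).$$ Moreover $W^0(A\to A)=0$ for every state $A$. Hence for $\varepsilon=0$ the left-hand side is at most $0$.
   Context: Conventions. The constants $k>0$ (Boltzmann's constant) and $T>0$ (temperature) are fixed. A state is a finite-level system with energies $E_1,\dots,E_d\in\mathbb{R}\cup\{+\infty\}$, not all $+\infty$, together with a diagonal density matrix $\rho=\sum_i\lambda_i|e_i\rangle\langle e_i|$. Equivalently, it is a probability vector $(\lambda_i)$ over the levels, and we require $\lambda_i=0$ whenever $E_i=+\infty$. Gibbs rescaling. $G^T(\rho)$ is the function on $[0,\infty)$ built as follows. Each level $i$ with $E_i<\infty$ is represented by a block: an interval of length $e^{-E_i/kT}$ on which the function takes the constant value $\lambda_i e^{E_i/kT}$, so the block has area $\lambda_i$. The blocks are placed consecutively starting at $0$, in order of nonincreasing height. The function is $0$ beyond $Z=\sum_{i:E_i<\infty}e^{-E_i/kT}$. Thus $G^T(\rho)$ is a nonincreasing probability density supported in $[0,Z]$. Relative mixedness. For nonincreasing integrable functions $f,g\ge 0$ on $[0,\infty)$, $$M(f\|g):=\max\Big\{m>0:\ \int_0^l f(x)\,dx\ge\int_0^{lm}g(x)\,dx\ \text{for all } l\ge 0\Big\}.$$ For $\varepsilon\in[0,1)$ define $$W^\varepsilon(\rho\to\sigma):=kT\ln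 M\big(G^T(\rho)/(1-\varepsilon)\,\big\|\,G^T(\sigma)\big).$$ *)

(* Defs.v *)
From Stdlib Require Import Reals List ClassicalEpsilon.
Import ListNotations.
Open Scope R_scope.

(* A level is a pair (E_i, lambda_i); E_i = None encodes E_i = +infinity.
   A state is a finite list of levels (a diagonal density matrix, i.e. a
   probability vector over the levels). *)
Definition level := (option R * R)%type.
Definition state := list level.

Definition is_state (rho : state) : Prop :=
  (forall p, In p rho -> 0 <= snd p) /\
  fold_right (fun p s => snd p + s) 0 rho = 1 /\
  (forall p, In p rho -> fst p = None -> snd p = 0) /\
  (exists p, In p rho /\ fst p <> None).

(* The block (width, height) of a level with finite energy. *)
Definition block (kB T : R) (lev : level) : list (R * R) :=
  match fst lev with
  | Some E => [(exp (- E / (kB * T)), snd lev * exp (E / (kB * T)))]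
  | None => []
  end.

Definition blocks (kB T : R) (rho : state) : list (R * R) :=
  flat_map (block kB T) rho.

Fixpoint ins (b : R * R) (l : list (R * R)) : list (R * R) :=
  match l with
  | [] => [b]
  | c :: l' => if Rle_dec (snd c) (snd b) then b :: c :: l' else c :: ins b l'
  end.

Fixpoint isort (l : list (R * R)) : list (R * R) :=
  match l with
  | [] => []
  | b :: l' => ins b (isort l')
  end.

Fixpoint place (bs : list (R * R)) (off x : R) : R :=
  match bs with
  | [] => 0
  | (w, h) :: bs' => if Rlt_dec x (off + w) then h else place bs' (off + w) x
  end.

Definition Gibbs (kB T : R) (rho : state) (x : R) : R :=
  if Rlt_dec x 0 then 0 else place (isort (blocks kB T rho)) 0 x.

Definition mix_ok (f g : R -> R) (m : R) : Prop :=
  0 < m /\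
  forall l, 0 <= l ->
    forall (pr1 : Riemann_integrable f 0 l) (pr2 : Riemann_integrable g 0 (l * m)),
      RiemannInt pr1 >= RiemannInt pr2.

Definition is_M (f g : R -> R) (m : R) : Prop :=
  mix_ok f g m /\ forall m', mix_ok f g m' -> m' <= m.

Definition M (f g : R -> R) : R := epsilon (inhabits 0) (is_M f g).

Definition W (kB T eps : R) (rho sigma : state) : R :=
  kB * T * ln (M (fun x => Gibbs kB T rho x / (1 - eps)) (Gibbs kB T sigma)).

(* Main.v *)
Require Import Defs.
From Stdlib Require Import Reals Arith Lra Lia List Classical ClassicalEpsilon.
From Coquelicot Require Import Coquelicot.
Import ListNotations.
Open Scope R_scope.

Lemma RInt_cst (c a b : R) : RInt (fun _ => c) a b = c * (b - a).
Proof. rewrite RInt_const. unfold scal; simpl; unfold mult; simpl. ring. Qed.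

Lemma split_int (f : R -> R) (c : R) :
  (forall a b, a <= b <= c -> ex_RInt f a b) ->
  (forall a b, c <= a <= b -> ex_RInt f a b) ->
  forall a b, ex_RInt f a b.
Proof.
  intros H1 H2.
  assert (K : forall a b, a <= b -> ex_RInt f a b).
  { intros a b Hab.
    destruct (Rle_dec b c). apply H1; lra.
    destruct (Rle_dec c a). apply H2; lra.
    apply ex_RInt_Chasles with c. apply H1; lra. apply H2; lra. }
  intros a b. destruct (Rle_dec a b). now apply K.
  apply ex_RInt_swap, K; lra.
Qed.

Lemma place_int : forall bs off a b, ex_RInt (place bs off) a b.
Proof.
  induction bs as [|[w h] bs IH]; intros off.
  - intros a b. apply ex_RInt_ext with (fun _ => 0). intros; reflexivity.
    apply ex_RInt_const.
  - apply split_int with (off + w).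
    + intros a b Hab. apply ex_RInt_ext with (fun _ => h).
      intros x Hx. rewrite Rmin_left in Hx by lra. rewrite Rmax_right in Hx by lra.
      simpl. destruct (Rlt_dec x (off + w)); [reflexivity | lra].
      apply ex_RInt_const.
    + intros a b Hab. apply ex_RInt_ext with (place bs (off + w)).
      intros x Hx. rewrite Rmin_left in Hx by lra. rewrite Rmax_right in Hx by lra.
      simpl. destruct (Rlt_dec x (off + w)); [lra | reflexivity].
      apply IH.
Qed.

Lemma Gibbs_int kB T rho : forall a b, ex_RInt (Gibbs kB T rho) a b.
Proof.
  apply split_int with 0.
  - intros a b Hab. apply ex_RInt_ext with (fun _ => 0).
    intros x Hx. rewrite Rmin_left in Hx by lra. rewrite Rmax_right in Hx by lra.
    unfold Gibbs. destruct (Rlt_dec x 0); [reflexivity | lra].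
    apply ex_RInt_const.
  - intros a b Hab. apply ex_RInt_ext with (place (isort (blocks kB T rho)) 0).
    intros x Hx. rewrite Rmin_left in Hx by lra. rewrite Rmax_right in Hx by lra.
    unfold Gibbs. destruct (Rlt_dec x 0); [lra | reflexivity].
    apply place_int.
Qed.

Definition Sb (bs : list (R * R)) := fold_right (fun p s => fst p * snd p + s) 0 bs.
Definition Zb (bs : list (R * R)) := fold_right (fun p s => fst p + s) 0 bs.
Definition Hb (bs : list (R * R)) := fold_right (fun p s => snd p + s) 0 bs.
Definition okb (bs : list (R * R)) := forall p, In p bs -> 0 < fst p /\ 0 <= snd p.

Lemma okb_cons p bs : okb (p :: bs) -> okb bs /\ 0 < fst p /\ 0 <= snd p.
Proof. intros H. split. intros q Hq; apply H; now right. apply H; now left. Qed.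

Lemma Sb_nn bs : okb bs -> 0 <= Sb bs.
Proof. induction bs as [|p bs IH]; simpl; intros H. lra.
  apply okb_cons in H as [H1 [H2 H3]]. specialize (IH H1). nra. Qed.
Lemma Zb_nn bs : okb bs -> 0 <= Zb bs.
Proof. induction bs as [|p bs IH]; simpl; intros H. lra.
  apply okb_cons in H as [H1 [H2 H3]]. specialize (IH H1). nra. Qed.
Lemma Hb_nn bs : okb bs -> 0 <= Hb bs.
Proof. induction bs as [|p bs IH]; simpl; intros H. lra.
  apply okb_cons in H as [H1 [H2 H3]]. specialize (IH H1). nra. Qed.

Lemma place_bounds bs : okb bs -> forall off x, 0 <= place bs off x <= Hb bs.
Proof. induction bs as [|[w h] bs IH]; simpl; intros H off x. lra.
  apply okb_cons in H as [H1 [H2 H3]]. simpl in *.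
  pose proof (Hb_nn _ H1).
  destruct (Rlt_dec x (off + w)). lra. specialize (IH H1 (off + w) x). lra. Qed.

Lemma place_RInt bs : okb bs -> forall off l, off <= l ->
  RInt (place bs off) off l <= Sb bs /\ 0 <= RInt (place bs off) off l /\
  (off + Zb bs <= l -> RInt (place bs off) off l = Sb bs).
Proof.
  induction bs as [|[w h] bs IH]; intros H off l Hl.
  - assert (E : RInt (place [] off) off l = 0).
    { rewrite (RInt_ext _ (fun _ => 0) off l). 2:{ intros; reflexivity. } rewrite RInt_cst. apply Rmult_0_l. }
    rewrite E. simpl. lra.
  - apply okb_cons in H as [H1 [H2 H3]]. simpl in H2, H3.
    change (Sb ((w,h)::bs)) with (w*h + Sb bs); change (Zb ((w,h)::bs)) with (w + Zb bs).
    pose proof (Zb_nn _ H1). pose proof (Sb_nn _ H1).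
    assert (E1 : forall u, off <= u <= off + w -> RInt (place ((w, h) :: bs) off) off u = h * (u - off)).
    { intros u Hu. rewrite (RInt_ext _ (fun _ => h)). apply RInt_cst.
      intros x Hx. rewrite Rmin_left in Hx by lra. rewrite Rmax_right in Hx by lra.
      simpl. destruct (Rlt_dec x (off + w)); [reflexivity | lra]. }
    destruct (Rlt_dec l (off + w)).
    + rewrite E1 by lra.
      assert (h*(l-off) <= h*w) by (apply Rmult_le_compat_l; lra).
      assert (0 <= h*(l-off)) by (apply Rmult_le_pos; lra).
      split; [lra|split; [lra|intros; lra]].
    + rewrite <- (RInt_Chasles _ off (off + w) l) by apply place_int.
      rewrite E1 by lra.
      rewrite (RInt_ext _ (place bs (off + w)) (off + w) l).
      2:{ intros x Hx. rewrite Rmin_left in Hx by lra. rewrite Rmax_right in Hx by lra.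
      simpl. destruct (Rlt_dec x (off + w)); [lra | reflexivity]. }
      destruct (IH H1 (off + w) l) as [A [B C]]. lra.
      unfold plus; simpl.
      replace (h * (off + w - off)) with (w*h) by ring.
      assert (0 <= w*h) by (apply Rmult_le_pos; lra).
      split; [lra|split; [lra|intros; rewrite C by lra; reflexivity]].
Qed.

Lemma ins_In b l x : In x (ins b l) <-> b = x \/ In x l.
Proof. induction l as [|c l IH]; simpl. tauto.
  destruct (Rle_dec (snd c) (snd b)); simpl. tauto. rewrite IH. tauto. Qed.

Lemma isort_In l x : In x (isort l) <-> In x l.
Proof. induction l as [|b l IH]; simpl. tauto. rewrite ins_In, IH. tauto. Qed.

Lemma ins_S b l : Sb (ins b l) = fst b * snd b + Sb l.
Proof. induction l as [|c l IH]; simpl. reflexivity.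
  destruct (Rle_dec (snd c) (snd b)); simpl. reflexivity. change (fst c * snd c + Sb (ins b l) = fst b * snd b + (fst c * snd c + Sb l)). rewrite IH. ring. Qed.

Lemma isort_S l : Sb (isort l) = Sb l.
Proof. induction l as [|b l IH]; simpl. reflexivity. rewrite ins_S, IH. reflexivity. Qed.

Definition top (l : list (R*R)) := match l with [] => True | c :: _ => forall y, In y l -> snd y <= snd c end.

Lemma ins_top b l : top l -> top (ins b l).
Proof. destruct l as [|c l]; simpl; intros H.
  - intros y [<-|[]]; lra.
  - destruct (Rle_dec (snd c) (snd b)); simpl.
    + intros y [<-|[<-|Hy]]. lra. lra. specialize (H y (or_intror Hy)); lra.
    + intros y [<-|Hy]. lra. apply ins_In in Hy as [<-|Hy]. lra. apply H; now right.
Qed.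

Lemma isort_top l : top (isort l).
Proof. induction l; simpl. exact I. now apply ins_top. Qed.

Lemma okb_isort l : okb l -> okb (isort l).
Proof. intros H p Hp. apply H. now apply isort_In. Qed.

Lemma exp_inv_mul (a : R) : exp (- a) * exp a = 1.
Proof. rewrite <- exp_plus. replace (-a + a) with 0 by ring. apply exp_0. Qed.

Lemma blocks_ok kB T rho : (forall p, In p rho -> 0 <= snd p) -> okb (blocks kB T rho).
Proof.
  intros H b Hb. unfold blocks in Hb. apply in_flat_map in Hb as [lev [Hl Hb]].
  unfold block in Hb. destruct (fst lev) as [E|]; simpl in Hb; [|destruct Hb].
  destruct Hb as [<-|[]]; simpl. split. apply exp_pos.
  apply Rmult_le_pos. now apply H. left; apply exp_pos.
Qed.

Lemma Sb_app l1 l2 : Sb (l1 ++ l2) = Sb l1 + Sb l2.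
Proof. induction l1; simpl. change (Sb l2 = 0 + Sb l2). ring. change (fst a * snd a + Sb (l1 ++ l2) = fst a * snd a + Sb l1 + Sb l2). rewrite IHl1. ring. Qed.

Lemma blocks_S kB T rho : 0 < kB -> 0 < T ->
  (forall p, In p rho -> fst p = None -> snd p = 0) ->
  Sb (blocks kB T rho) = fold_right (fun p s => snd p + s) 0 rho.
Proof.
  intros HkB HT. induction rho as [|lev rho IH]; intros H. reflexivity.
  unfold blocks; simpl. fold (blocks kB T rho). rewrite Sb_app, IH.
  2:{ intros p Hp; apply H; now right. }
  f_equal. unfold block. destruct (fst lev) as [E|] eqn:He; simpl.
  - replace (- E / (kB * T)) with (- (E / (kB * T))) by (field; lra).
    transitivity (snd lev * (exp (- (E / (kB * T))) * exp (E / (kB * T)))). ring.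
    rewrite exp_inv_mul. ring.
  - symmetry. apply H. now left. exact He.
Qed.

Lemma Sb_pos_ex l : okb l -> Sb l <> 0 -> exists y, In y l /\ 0 < snd y.
Proof.
  induction l as [|y l IH]; intros H Hs. simpl in Hs; lra.
  change (fst y * snd y + Sb l <> 0) in Hs.
  apply okb_cons in H as [H1 [H2 H3]].
  destruct (Rle_dec (snd y) 0).
  - assert (snd y = 0) by lra. rewrite H in Hs. destruct IH as [z [Hz1 Hz2]]; auto.
    intro E; apply Hs; rewrite E; ring. exists z; split; auto; now right.
  - exists y; split; [now left|lra].
Qed.

Definition good (g : R -> R) : Prop :=
  (forall a b, ex_RInt g a b) /\ (forall x, 0 <= g x) /\ (exists H, forall x, g x <= H) /\
  (exists c d, 0 < c /\ 0 < d /\ forall x, 0 <= x <= d -> c <= g x) /\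
  (forall l, 0 <= l -> RInt g 0 l <= 1) /\
  (exists Z, 0 <= Z /\ forall l, Z <= l -> RInt g 0 l = 1).

Lemma Gibbs_good kB T rho : 0 < kB -> 0 < T -> is_state rho -> good (Gibbs kB T rho).
Proof.
  intros HkB HT [Hnn [Hsum [Hnone _]]].
  set (bs := isort (blocks kB T rho)).
  assert (Hok : okb bs) by (apply okb_isort, blocks_ok; auto).
  assert (HS : Sb bs = 1) by (unfold bs; rewrite isort_S, blocks_S; auto).
  assert (HG : forall x, 0 <= x -> Gibbs kB T rho x = place bs 0 x).
  { intros x Hx. unfold Gibbs. destruct (Rlt_dec x 0). lra. reflexivity. }
  assert (HR : forall l, 0 <= l -> RInt (Gibbs kB T rho) 0 l = RInt (place bs 0) 0 l).
  { intros l Hl. apply RInt_ext. intros x Hx. rewrite Rmin_left in Hx by lra.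
    rewrite Rmax_right in Hx by lra. apply HG; lra. }
  split; [apply Gibbs_int|]. split.
  { intros x. unfold Gibbs. destruct (Rlt_dec x 0). lra. apply place_bounds; auto. }
  split. { exists (Hb bs). intros x. unfold Gibbs. destruct (Rlt_dec x 0).
    apply Hb_nn; auto. apply place_bounds; auto. }
  split.
  { destruct (Sb_pos_ex bs Hok) as [y [Hy1 Hy2]]. lra.
    pose proof (isort_top (blocks kB T rho)) as Htop. fold bs in Htop.
    destruct bs as [|[w1 h1] rest] eqn:Ebs. destruct Hy1.
    simpl in Htop. pose proof (Htop y Hy1). simpl in H.
    destruct (Hok (w1,h1) (or_introl eq_refl)) as [Hw _]; simpl in Hw.
    exists h1, (w1/2). split. lra. split. lra.
    intros x Hx. rewrite HG by lra. simpl. destruct (Rlt_dec x (0 + w1)). lra. lra. }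
  split.
  { intros l Hl. rewrite HR by auto. rewrite <- HS. apply place_RInt; auto. }
  exists (Zb bs). split. apply Zb_nn; auto.
  intros l Hl. pose proof (Zb_nn _ Hok). rewrite HR by lra. rewrite <- HS.
  apply place_RInt; auto; lra.
Qed.

Section G.
Variable g : R -> R.
Hypothesis Hi : forall a b, ex_RInt g a b.
Hypothesis Hn : forall x, 0 <= g x.

Lemma F_split x y : RInt g 0 y = RInt g 0 x + RInt g x y.
Proof. rewrite <- (RInt_Chasles g 0 x y) by auto. reflexivity. Qed.

Lemma F_ge0 a b : a <= b -> 0 <= RInt g a b.
Proof. intros. apply RInt_ge_0; auto. Qed.

Lemma F_mono x y : x <= y -> RInt g 0 x <= RInt g 0 y.
Proof. intros. rewrite (F_split x y). pose proof (F_ge0 x y H). lra. Qed.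

Lemma F_lip H x y : (forall z, g z <= H) -> x <= y -> RInt g 0 y - RInt g 0 x <= H * (y - x).
Proof. intros HH Hxy. rewrite (F_split x y).
  assert (RInt g x y <= RInt (fun _ => H) x y).
  { apply RInt_le; auto. apply ex_RInt_const. }
  rewrite RInt_cst in H0. lra. Qed.

Lemma F_low c a b : a <= b -> (forall x, a <= x <= b -> c <= g x) -> c * (b - a) <= RInt g a b.
Proof. intros Hab Hc. rewrite <- RInt_cst. apply RInt_le; auto. apply ex_RInt_const.
  intros; apply Hc; lra. Qed.
End G.

Lemma mix_ok_iff f g m : (forall a b, ex_RInt f a b) -> (forall a b, ex_RInt g a b) ->
  (mix_ok f g m <-> 0 < m /\ forall l, 0 <= l -> RInt g 0 (l * m) <= RInt f 0 l).
Proof.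
  intros Hf Hg. split.
  - intros [Hm H]. split; auto. intros l Hl.
    specialize (H l Hl (ex_RInt_Reals_0 _ _ _ (Hf 0 l)) (ex_RInt_Reals_0 _ _ _ (Hg 0 (l*m)))).
    rewrite <- !RInt_Reals in H. lra.
  - intros [Hm H]. split; auto. intros l Hl pr1 pr2. rewrite <- !RInt_Reals.
    specialize (H l Hl). lra.
Qed.

Lemma scaled_int g q : (forall a b, ex_RInt g a b) -> forall a b, ex_RInt (fun x => g x / q) a b.
Proof. intros H a b. apply ex_RInt_ext with (fun x => scal (/ q) (g x)).
  intros; unfold scal; simpl; unfold mult; simpl; unfold Rdiv; ring.
  apply ex_RInt_scal, H. Qed.

Lemma scaled_RInt g q : (forall a b, ex_RInt g a b) -> forall a b, RInt (fun x => g x / q) a b = RInt g a b / q.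
Proof. intros H a b.
  pose proof (RInt_scal (V := R_CompleteNormedModule) g a b (/ q) (H a b)) as E.
  unfold scal in E; simpl in E; unfold mult in E; simpl in E.
  unfold Rdiv. rewrite (Rmult_comm (RInt g a b)), <- E. apply RInt_ext. intros x _. apply Rmult_comm. Qed.

Lemma is_M_unique f g a b : is_M f g a -> is_M f g b -> a = b.
Proof. intros [Ha Ha'] [Hb Hb']. apply Rle_antisym; auto. Qed.

Lemma M_spec f g a : is_M f g a -> M f g = a.
Proof. intros H. unfold M. apply (is_M_unique f g). apply epsilon_spec. now exists a. exact H. Qed.

Lemma exists_M gr gs q : good gr -> good gs -> 0 < q <= 1 ->
  is_M (fun x => gr x / q) gs (M (fun x => gr x / q) gs) /\ 0 < M (fun x => gr x / q) gs.
Proof.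
  intros [Ri [Rn [[Hr HHr] [[cr [dr [Hcr [Hdr Hlr]]]] [Rle1 [Zr [HZr HZr1]]]]]]]
         [Si [Sn [[Hs HHs] [[cs [ds [Hcs [Hds Hls]]]] [Sle1 [Zs [HZs HZs1]]]]]]] Hq.
  set (f := fun x => gr x / q).
  assert (Fi : forall a b, ex_RInt f a b) by (apply scaled_int; auto).
  assert (FR : forall l, RInt f 0 l = RInt gr 0 l / q) by (intros; apply scaled_RInt; auto).
  assert (Hs0 : 0 <= Hs) by (specialize (HHs 0); specialize (Sn 0); lra).
  assert (Hr0 : 0 <= Hr) by (specialize (HHr 0); specialize (Rn 0); lra).
  assert (FF : forall l, 0 <= l -> RInt gr 0 l <= RInt f 0 l).
  { intros l Hl. rewrite FR. pose proof (F_ge0 gr Ri Rn 0 l Hl).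
    apply Rmult_le_reg_r with q. lra. unfold Rdiv. rewrite Rmult_assoc, Rinv_l by lra. nra. }
  set (E := fun m => mix_ok f gs m).
  set (Hs' := Hs + 1). set (Zr' := Zr + dr).
  assert (HHs' : 0 < Hs') by (unfold Hs'; lra). assert (HZr' : 0 < Zr') by (unfold Zr'; lra).
  set (m0 := Rmin (cr / Hs') (cr * dr / (Hs' * Zr'))).
  assert (Hm0 : 0 < m0).
  { unfold m0. apply Rmin_pos; unfold Hs', Zr'; apply Rdiv_lt_0_compat; nra. }
  assert (E0 : E m0).
  { unfold E. apply mix_ok_iff; auto. split; auto. intros l Hl.
    assert (Ub1 : RInt gs 0 (l * m0) <= Hs' * (l * m0)).
    { pose proof (F_lip gs Si Hs 0 (l*m0) HHs). rewrite RInt_point in H.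
      unfold zero in H; simpl in H. assert (0 <= l * m0) by nra. unfold Hs'. nra. }
    assert (Ub2 : RInt gs 0 (l * m0) <= 1) by (apply Sle1; nra).
    eapply Rle_trans; [|apply FF; auto].
    destruct (Rle_dec l dr).
    - assert (cr * (l - 0) <= RInt gr 0 l) by (apply F_low; auto; intros; apply Hlr; lra).
      assert (m0 <= cr / Hs') by apply Rmin_l.
      assert (Hs' * m0 <= cr). { unfold Hs' in *. apply Rmult_le_reg_r with (/ (Hs + 1)).
        apply Rinv_0_lt_compat; lra. replace ((Hs + 1) * m0 * / (Hs + 1)) with m0 by (field; lra).
        exact H0. }
      nra.
    - destruct (Rle_dec l Zr').
      + assert (cr * (dr - 0) <= RInt gr 0 dr) by (apply F_low; auto; lra || (intros; apply Hlr; lra)).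
        pose proof (F_mono gr Ri Rn dr l ltac:(lra)).
        assert (m0 <= cr * dr / (Hs' * Zr')) by apply Rmin_r.
        assert (0 < Hs' * Zr') by (unfold Hs', Zr'; nra).
        assert (Hs' * Zr' * m0 <= cr * dr).
        { apply Rmult_le_reg_r with (/ (Hs' * Zr')). apply Rinv_0_lt_compat; lra.
          replace (Hs' * Zr' * m0 * / (Hs' * Zr')) with m0 by (field; lra). exact H1. }
        assert (Hs' * (l * m0) <= Hs' * Zr' * m0).
        { assert (0 <= Hs') by (unfold Hs'; lra). 
          replace (Hs' * (l * m0)) with (Hs' * m0 * l) by ring.
          replace (Hs' * Zr' * m0) with (Hs' * m0 * Zr') by ring.
          apply Rmult_le_compat_l; nra. }
        lra.
      + rewrite HZr1 by (unfold Zr' in *; lra). lra. }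
  assert (Bd : forall m, E m -> m <= Hr / q / cs + 1).
  { intros m Em. unfold E in Em. apply mix_ok_iff in Em as [Hm Hml]; auto.
    destruct (Rle_dec m (Hr / q / cs + 1)) as [|Hgt]; auto. exfalso.
    assert (Hb0 : 0 <= Hr / q / cs) by (apply Rmult_le_pos; [apply Rmult_le_pos|]; try lra;
      left; apply Rinv_0_lt_compat; lra).
    set (l := ds / m).
    assert (Hl : 0 < l) by (apply Rdiv_lt_0_compat; lra).
    assert (Hlm : l * m = ds) by (unfold l; field; lra).
    specialize (Hml l (Rlt_le _ _ Hl)). rewrite Hlm in Hml.
    assert (cs * (ds - 0) <= RInt gs 0 ds) by (apply F_low; auto; lra || (intros; apply Hls; lra)).
    pose proof (F_lip gr Ri Hr 0 l HHr ltac:(lra)). rewrite RInt_point in H0.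
    unfold zero in H0; simpl in H0. rewrite FR in Hml.
    assert (RInt gr 0 l / q <= Hr * l / q).
    { unfold Rdiv. apply Rmult_le_compat_r. left; apply Rinv_0_lt_compat; lra. lra. }
    assert (Hr * l / q = Hr / q / cs * cs * ds / m) by (unfold l; field; lra).
    assert (Hr / q / cs * cs * ds / m < cs * ds).
    { apply Rmult_lt_reg_r with m. lra. replace (Hr / q / cs * cs * ds / m * m) with (Hr / q / cs * (cs * ds)) by (field; lra).
      assert (0 < cs * ds) by nra. nra. }
    lra. }
  destruct (completeness E) as [ms [Hub Hlub]].
  { exists (Hr / q / cs + 1). intros m Em. now apply Bd. }
  { exists m0. exact E0. }
  assert (Hms : m0 <= ms) by (apply Hub; exact E0).
  assert (Ems : E ms).
  { unfold E. apply mix_ok_iff; auto. split. lra. intros l Hl.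
    destruct (Rle_lt_or_eq_dec 0 l Hl) as [Hl0|<-].
    2:{ rewrite Rmult_0_l. rewrite !RInt_point. lra. }
    apply Rnot_lt_le. intros Hlt.
    set (d := RInt gs 0 (l * ms) - RInt f 0 l).
    set (eta := d / (Hs * l + 1)).
    assert (Hd : 0 < d) by (unfold d; lra).
    assert (Heta : 0 < eta) by (unfold eta; apply Rdiv_lt_0_compat; nra).
    destruct (classic (exists m, E m /\ ms - eta < m)) as [[m [Em Hm]]|Hno].
    - pose proof (Hub m Em) as Hmle.
      unfold E in Em. apply mix_ok_iff in Em as [Hm0' Hml]; auto.
      specialize (Hml l Hl).
      pose proof (F_lip gs Si Hs (l*m) (l*ms) HHs ltac:(nra)).
      assert (Hs * (l * ms - l * m) <= Hs * l * eta).
      { replace (Hs * (l * ms - l * m)) with (Hs * l * (ms - m)) by ring.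
        apply Rmult_le_compat_l; nra. }
      assert (Hs * l * eta < d).
      { unfold eta. apply Rmult_lt_reg_r with (Hs * l + 1). nra.
        replace (Hs * l * (d / (Hs * l + 1)) * (Hs * l + 1)) with (Hs * l * d) by (field; nra). nra. }
      unfold d in *. lra.
    - assert (ms <= ms - eta).
      { apply Hlub. intros m Em. apply Rnot_lt_le. intros Hc. apply Hno. exists m; auto. }
      lra. }
  assert (HisM : is_M f gs ms) by (split; [exact Ems| intros m' Hm'; now apply Hub]).
  rewrite (M_spec _ _ _ HisM). split. exact HisM. lra.
Qed.

Lemma W0 kB T B : 0 < kB -> 0 < T -> is_state B -> W kB T 0 B B = 0.
Proof.
  intros HkB HT HB. pose proof (Gibbs_good kB T B HkB HT HB) as Hg.
  destruct Hg as [Gi [Gn [_ [[c [d [Hc [Hd Hlow]]]] _]]]].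
  set (G := Gibbs kB T B) in *.
  assert (HM : is_M (fun x => G x / (1 - 0)) G 1).
  { split.
    - apply mix_ok_iff; auto. apply scaled_int; auto. split. lra. intros l Hl.
      rewrite scaled_RInt by auto. rewrite Rmult_1_r. replace (1 - 0) with 1 by ring.
      unfold Rdiv; rewrite Rinv_1, Rmult_1_r. lra.
    - intros m' Hm'. apply mix_ok_iff in Hm' as [Hm0 Hml]; auto. 2: apply scaled_int; auto.
      apply Rnot_lt_le. intros Hgt.
      set (l := d / m').
      assert (Hl0 : 0 < l) by (apply Rdiv_lt_0_compat; lra).
      assert (Hlm : l * m' = d) by (unfold l; field; lra).
      assert (Hld : l < d). { unfold l. apply Rmult_lt_reg_r with m'. lra.
        replace (d / m' * m') with d by (field; lra). nra. }
      specialize (Hml l (Rlt_le _ _ Hl0)). rewrite Hlm, scaled_RInt in Hml by auto.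
      replace (1 - 0) with 1 in Hml by ring. unfold Rdiv in Hml; rewrite Rinv_1, Rmult_1_r in Hml.
      rewrite (F_split G Gi l d) in Hml.
      assert (c * (d - l) <= RInt G l d) by (apply F_low; auto; lra || (intros; apply Hlow; lra)).
      assert (0 < c * (d - l)) by (apply Rmult_lt_0_compat; lra). lra. }
  unfold W. fold G. rewrite (M_spec _ _ _ HM). rewrite ln_1. ring.
Qed.

Lemma bernoulli eps (n : nat) : 0 <= eps <= 1 -> 1 - INR n * eps <= (1 - eps) ^ n.
Proof.
  intros He. induction n as [|n IH]. simpl. lra.
  rewrite S_INR. simpl.
  assert ((1 - INR n * eps) * (1 - eps) <= (1 - eps) ^ n * (1 - eps)) by (apply Rmult_le_compat_r; lra).
  pose proof (pos_INR n). nra.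
Qed.

Fixpoint prodM (Mi : nat -> R) (k : nat) : R :=
  match k with O => 1 | S k => prodM Mi k * Mi k end.

Lemma prodM_pos Mi k : (forall i, (i < k)%nat -> 0 < Mi i) -> 0 < prodM Mi k.
Proof. induction k; simpl; intros H. lra. apply Rmult_lt_0_compat. apply IHk; intros; apply H; lia. apply H; lia. Qed.

Lemma sum_ln c Mi n : (forall i, (i <= n)%nat -> 0 < Mi i) ->
  sum_f_R0 (fun i => c * ln (Mi i)) n = c * ln (prodM Mi (S n)).
Proof.
  induction n; intros H; simpl. rewrite Rmult_1_l. reflexivity.
  rewrite IHn by (intros; apply H; lia). simpl.
  rewrite (ln_mult (prodM Mi n * Mi n)). ring.
  apply Rmult_lt_0_compat. apply prodM_pos. intros; apply H; lia. apply H; lia. apply H; lia.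
Qed.

Theorem main_ineq (kB T : R) (HkB : 0 < kB) (HT : 0 < T)
  (m : nat) (A : nat -> state) (eps : R) :
  (1 <= m)%nat ->
  (forall i, (i < m)%nat -> is_state (A i)) ->
  0 <= eps -> INR m * eps < 1 ->
  sum_f_R0 (fun i => W kB T eps (A i) (A (S i mod m)%nat)) (m - 1)
    <= W kB T (INR m * eps) (A 0%nat) (A 0%nat).
Proof.
  intros Hm HA He Hme.
  assert (Hm1 : 1 <= INR m) by (apply (le_INR 1); lia).
  assert (He1 : eps < 1) by nra.
  set (Mi := fun i => M (fun x => Gibbs kB T (A i) x / (1 - eps)) (Gibbs kB T (A (S i mod m)%nat))).
  assert (Hgood : forall i, (i < m)%nat -> good (Gibbs kB T (A i))).
  { intros; apply Gibbs_good; auto. }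
  assert (HmodS : forall i, (S i mod m < m)%nat) by (intros; apply Nat.mod_upper_bound; lia).
  assert (HMi : forall i, (i < m)%nat ->
    is_M (fun x => Gibbs kB T (A i) x / (1 - eps)) (Gibbs kB T (A (S i mod m)%nat)) (Mi i) /\ 0 < Mi i).
  { intros i Hi. apply exists_M; auto. lra. }
  assert (Chain : forall k, (k <= m)%nat -> forall l, 0 <= l ->
    RInt (Gibbs kB T (A (k mod m)%nat)) 0 (l * prodM Mi k) <= RInt (Gibbs kB T (A 0%nat)) 0 l / (1 - eps) ^ k).
  { induction k as [|k IH]; intros Hk l Hl.
    - rewrite Nat.mod_0_l by lia. simpl. rewrite Rmult_1_r. unfold Rdiv; rewrite Rinv_1, Rmult_1_r. lra.
    - destruct (HMi k ltac:(lia)) as [[Hok _] Hpos].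
      destruct (Hgood k ltac:(lia)) as [Gi _].
      destruct (Hgood (S k mod m)%nat (HmodS k)) as [Gi' _].
      apply mix_ok_iff in Hok as [_ Hml]; [|apply scaled_int; auto|auto].
      assert (Hp : 0 < prodM Mi k) by (apply prodM_pos; intros; apply HMi; lia).
      specialize (Hml (l * prodM Mi k) ltac:(nra)).
      rewrite scaled_RInt in Hml by auto.
      specialize (IH ltac:(lia) l Hl). rewrite Nat.mod_small in IH by lia.
      simpl. replace (l * (prodM Mi k * Mi k)) with (l * prodM Mi k * Mi k) by ring.
      eapply Rle_trans. apply Hml.
      replace (RInt (Gibbs kB T (A 0%nat)) 0 l / ((1 - eps) * (1 - eps) ^ k))
        with (RInt (Gibbs kB T (A 0%nat)) 0 l / (1 - eps) ^ k / (1 - eps))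
        by (field; split; [apply pow_nonzero|]; lra).
      unfold Rdiv at 1 3. apply Rmult_le_compat_r. left; apply Rinv_0_lt_compat; lra.
      exact IH. }
  set (q := 1 - INR m * eps).
  assert (Hq : 0 < q <= 1) by (unfold q; nra).
  destruct (Hgood 0%nat ltac:(lia)) as [G0i [G0n _]].
  destruct (exists_M (Gibbs kB T (A 0%nat)) (Gibbs kB T (A 0%nat)) q (Hgood 0%nat ltac:(lia)) (Hgood 0%nat ltac:(lia)) Hq)
    as [[_ Hmax] Hpos].
  assert (HP : 0 < prodM Mi m) by (apply prodM_pos; intros; apply HMi; auto).
  assert (Hadm : mix_ok (fun x => Gibbs kB T (A 0%nat) x / q) (Gibbs kB T (A 0%nat)) (prodM Mi m)).
  { apply mix_ok_iff; auto. apply scaled_int; auto. split; auto. intros l Hl.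
    specialize (Chain m (le_n m) l Hl). rewrite Nat.mod_same in Chain by lia.
    rewrite scaled_RInt by auto. eapply Rle_trans. exact Chain.
    pose proof (F_ge0 _ G0i G0n 0 l Hl).
    pose proof (bernoulli eps m ltac:(lra)) as Hb. fold q in Hb.
    unfold Rdiv. apply Rmult_le_compat_l; auto. apply Rinv_le_contravar; lra. }
  specialize (Hmax _ Hadm).
  destruct m as [|n]. lia. replace (S n - 1)%nat with n by lia.
  unfold W at 2. fold q.
  change (sum_f_R0 (fun i => kB * T * ln (Mi i)) n <=
    kB * T * ln (M (fun x => Gibbs kB T (A 0%nat) x / q) (Gibbs kB T (A 0%nat)))).
  rewrite sum_ln by (intros; apply HMi; lia).
  apply Rmult_le_compat_l. nra. apply ln_le; auto.
Qed.

Theorem mainTheorem4 (kB T : R) (HkB : 0 < kB) (HT : 0 < T)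
  (m : nat) (A : nat -> state) (eps : R) :
  (1 <= m)%nat ->
  (forall i, (i < m)%nat -> is_state (A i)) ->
  0 <= eps -> INR m * eps < 1 ->
  sum_f_R0 (fun i => W kB T eps (A i) (A (S i mod m)%nat)) (m - 1)
    <= W kB T (INR m * eps) (A 0%nat) (A 0%nat)
  /\ (forall B : state, is_state B -> W kB T 0 B B = 0)
  /\ (eps = 0 ->
      sum_f_R0 (fun i => W kB T eps (A i) (A (S i mod m)%nat)) (m - 1) <= 0).
Proof.
  intros Hm HA He Hme.
  pose proof (main_ineq kB T HkB HT m A eps Hm HA He Hme) as Hmain.
  split; [exact Hmain|]. split.
  - intros B HB. apply W0; auto.
  - intros ->. rewrite Rmult_0_r in Hmain. rewrite W0 in Hmain; [exact Hmain|exact HkB|exact HT|apply HA; lia].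
Qed.
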